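(* Let $A\in\mathsf{M}_n(\mathbb{C})$ and let $P=\{V_1,\dots,V_h\}$ be a partition of $\{1,\dots,n\}$. Let $\omega=\exp(2\pi \mathrm{i}/h)$ and $\alpha_{ij}=(i-j)\bmod h$ for integers $i,j$. Suppose that both of the following hold: (i) for every eigenvalue $\lambda$ of $A$ and every right Jordan chain $\{x_{\langle 0,j\rangle}\}_{j=1}^p$ of $A$ corresponding to $\lambda$, writing $x_{ij}$ for the subvector of $x_{\langle 0,j\rangle}$ indexed by $V_i$ ($i\in\{1,\dots,h\}$), and letting $x_{\langle k,j\rangle}\in\mathbb{C}^n$ be the vector whose subvector indexed by $V_i$ is $(\omega^k)^{\alpha_{ij}}x_{ij}$ for each $i$, the set $\{x_{\langle k,j\rangle}\}_{j=1}^p$ is a right Jordan chain of $A$ corresponding to $\lambda\omega^k$, for every $k\in\{0,1,\dots,h-1\}$; (ii) for every eigenvalue $\lambda$ of $A$ and every left Jordan chain $\{y_{\langle j,0\rangle}\}_{j=1}^p$ of $A$ corresponding to $\lambda$, writing $y_{ji}$ for the subvector of $y_{\langle j,0\rangle}$ indexed by $V_i$, and letting $y_{\langle j,k\rangle}\in\mathbb{C}^n$ be the vector whose subvector indexed by $V_i$ is $(\omega^k)^{\alpha_{ji}}y_{ji}$ for each $i$, the set $\{y_{\langle j,k\rangle}\}_{j=1}^p$ is a left Jordan chain of $A$ corresponding to $\lambda\omega^k$, for every $k\in\{0,1,\dots,h-1\}$. Then $A$ is $h$-cyclic with partition $P$.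
   Context: A right Jordan chain of $A$ corresponding to $\lambda$ is a list $x_1,\dots,x_p\in\mathbb{C}^n$ with $x_1\neq 0$, $Ax_1=\lambda x_1$ and $Ax_j=\lambda x_j+x_{j-1}$ for $1<j\le p$. A left Jordan chain of $A$ corresponding to $\lambda$ is a list $y_1,\dots,y_p\in\mathbb{C}^n$ (nonzero) with $y_p^\top A=\lambda y_p^\top$ and $y_j^\top A=\lambda y_j^\top+y_{j+1}^\top$ for $1\le j<p$ (so that these are the rows of $S^{-1}$ corresponding to a Jordan block when $S^{-1}AS$ is in Jordan form). Subvectors indexed by $V_i$ list the entries with indices in $V_i$ in increasing order. The digraph $\Gamma_A$ of $A=[a_{ij}]$ has vertex set $\{1,\dots,n\}$ and arcs $(i,j)$ with $a_{ij}\ne 0$; $A$ is $h$-cyclic with partition $P$ if for every arc $(i,j)$ there is $\ell\in\{1,\dots,h\}$ with $i\in V_\ell$, $j\in V_{\ell+1}$, where $V_{h+1}:=V_1$. *)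

(* Defs.v *)
From mathcomp Require Import all_boot all_algebra.
From mathcomp Require Import reals trigo.
From mathcomp Require Export complex.
Import GRing.Theory Num.Theory.
Set Implicit Arguments. Unset Strict Implicit. Unset Printing Implicit Defensive.
Local Open Scope ring_scope.
Local Open Scope complex_scope.

Definition omega (R : realType) (h : nat) : R[i] :=
  (cos (2 * pi / h%:R)) +i* (sin (2 * pi / h%:R)).

Definition alpha (h i j : nat) : nat := `|((i%:Z - j%:Z) %% h%:Z)%Z|%N.

(* Right Jordan chain x_1,...,x_p (0-indexed here: x 0, ..., x (p-1)). *)
Definition right_jordan_chain (F : fieldType) (n : nat) (A : 'M[F]_n) (lam : F)
    (x : nat -> 'cV[F]_n) (p : nat) : Prop :=
  [/\ (0 < p)%N, x 0%N != 0, A *m x 0%N = lam *: x 0%N &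
      forall j, (0 < j < p)%N -> A *m x j = lam *: x j + x j.-1].

(* Left Jordan chain y_1,...,y_p (0-indexed: y 0, ..., y (p-1)), all nonzero,
   as rows: y_p^T A = lam y_p^T, y_j^T A = lam y_j^T + y_{j+1}^T. *)
Definition left_jordan_chain (F : fieldType) (n : nat) (A : 'M[F]_n) (lam : F)
    (y : nat -> 'rV[F]_n) (p : nat) : Prop :=
  [/\ (0 < p)%N, (forall j, (j < p)%N -> y j != 0),
      y p.-1 *m A = lam *: y p.-1 &
      forall j, (j.+1 < p)%N -> y j *m A = lam *: y j + y j.+1].

(* The partition P = {V_1,...,V_h} of the index set is given by the block map
   [part : 'I_n -> 'I_h] (V_{l+1} = part^{-1}(l)), surjective so blocks are nonempty. *)
Definition is_partition (n h : nat) (part : 'I_n -> 'I_h) : Prop :=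
  forall l : 'I_h, exists r : 'I_n, part r = l.

Definition h_cyclic (F : fieldType) (n h : nat) (A : 'M[F]_n) (part : 'I_n -> 'I_h) : Prop :=
  forall i j : 'I_n, A i j != 0 -> (part j : nat) = ((part i).+1 %% h)%N.

(* x_<k,j>: the subvector on V_i is (w^k)^{alpha_{ij}} x_{ij}; blocks and chain
   positions are both 0-indexed, which leaves i - j unchanged. *)
Definition right_twist (R : realType) (n h : nat) (part : 'I_n -> 'I_h) (k : nat)
    (x : nat -> 'cV[R[i]]_n) : nat -> 'cV[R[i]]_n :=
  fun j => \col_r ((omega R h ^+ k) ^+ alpha h (part r) j * x j r ord0).

Definition left_twist (R : realType) (n h : nat) (part : 'I_n -> 'I_h) (k : nat)
    (y : nat -> 'rV[R[i]]_n) : nat -> 'rV[R[i]]_n :=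
  fun j => \row_r ((omega R h ^+ k) ^+ alpha h j (part r) * y j ord0 r).

(* Main.v *)
Require Import Defs.
From mathcomp Require Import all_boot all_order all_algebra.
From mathcomp Require Import reals trigo complex ring zify.
Import Order.TTheory GRing.Theory Num.Theory.
Local Open Scope ring_scope.
Local Open Scope complex_scope.

Lemma omega_pow (R : realType) h d :
  omega R h ^+ d = cos (d%:R * (2 * pi / h%:R)) +i* sin (d%:R * (2 * pi / h%:R)).
Proof.
rewrite /omega; set t := 2 * pi / h%:R.
elim: d => [|d IH]; first by rewrite expr0 !mul0r cos0 sin0.
rewrite exprSr IH -(natr1 d) mulrDl mul1r cosD sinD.
rewrite /GRing.mul /= ; congr (_ +i* _); exact: addrC.
Qed.

Lemma omega_h (R : realType) h : (0 < h)%N -> omega R h ^+ h = 1.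
Proof.
move=> h0; rewrite omega_pow mulrCA divff ?pnatr_eq0 -?lt0n // mulr1.
by rewrite mulr_natl cos2pi sin2pi.
Qed.

Lemma omega_neq1 (R : realType) h d : (0 < d < h)%N -> omega R h ^+ d != 1.
Proof.
case/andP=> d0 dh; have h0 : (0 < h)%N by apply: leq_trans dh.
have pi0 : (0 : R) < pi := pi_gt0 R.
rewrite omega_pow; set x := _ * _.
have x0 : 0 < x.
  by rewrite /x mulr_gt0 ?ltr0n // divr_gt0 ?ltr0n // mulr_gt0.
have x2 : x < pi *+ 2.
  have -> : x = (d%:R / h%:R) * (pi *+ 2) by rewrite /x -mulr_natl; ring.
  rewrite gtr_pMl; last by rewrite mulrn_wgt0.
  by rewrite ltr_pdivrMr ?ltr0n // mul1r ltr_nat.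
apply/negP; move/eqP=> [] c s.
case: (ltrgtP x pi) => xp.
- by move: (sin_gt0_pi (x := x)); rewrite x0 xp s ltxx => /(_ isT).
- have : 0 < sin (x - pi) by apply: sin_gt0_pi; rewrite subr_gt0 xp /= ltrBlDr -mulr2n.
  by rewrite -oppr_lt0 -sinDpi subrK s ltxx.
- by move: c; rewrite xp cospi => /eqP; rewrite eq_sym -subr_eq0 opprK -mulr2n pnatr_eq0.
Qed.

Lemma omega_mod (R : realType) h x : (0 < h)%N -> omega R h ^+ (x %% h) = omega R h ^+ x.
Proof. by move=> h0; rewrite {2}(divn_eq x h) exprD mulnC exprM (@omega_h R h h0) expr1n mul1r. Qed.

Lemma omega_neq0 (R : realType) h : (0 < h)%N -> omega R h != 0.
Proof.
move=> h0; apply/eqP => w0; have := @omega_h R h h0; rewrite w0 expr0n eqn0Ngt h0 /=.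
by move/eqP; rewrite eq_sym oner_eq0.
Qed.

Lemma omega_inj (R : realType) h a c : (a < h)%N -> (c < h)%N ->
  omega R h ^+ a = omega R h ^+ c -> a = c.
Proof.
move=> ah ch E; have h0 : (0 < h)%N by apply: leq_ltn_trans ah.
have w0 := @omega_neq0 R h h0.
have gen x y : (x < y)%N -> (y < h)%N -> omega R h ^+ x = omega R h ^+ y -> False.
  move=> xy yh E'.
  have /eqP : omega R h ^+ (y - x) != 1.
    by apply: omega_neq1; rewrite subn_gt0 xy /=; apply: leq_ltn_trans (leq_subr _ _) yh.
  apply; apply: (mulfI (expf_neq0 x w0)).
  by rewrite mulr1 -exprD (subnKC (ltnW xy)) E'.
case: (ltngtP a c) => ac.
- by case: (gen _ _ ac ch E).
- by case: (gen _ _ ac ah (esym E)).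
- exact: ac.
Qed.

Lemma alphaE h j l : (l <= h)%N -> alpha h j l = ((j + h - l) %% h)%N.
Proof.
move=> lh; rewrite /alpha.
have -> : (j%:Z - l%:Z = (-1) * h%:Z + (j + h - l)%N%:Z)%R.
  by rewrite -addnBA // PoszD -subzn // mulN1r; ring.
by rewrite modzMDl modz_nat absz_nat.
Qed.

Lemma omega_alpha (R : realType) h j l : (0 < h)%N -> (l <= h)%N ->
  omega R h ^+ alpha h j l = omega R h ^+ j * omega R h ^+ (h - l).
Proof. by move=> h0 lh; rewrite alphaE // omega_mod // -exprD addnBA. Qed.

Local Close Scope complex_scope.

Theorem theorem4p5 (R : realType) (n h : nat) (A : 'M[R[i]]_n)
    (part : 'I_n -> 'I_h) :
  is_partition part ->
  (forall (lam : R[i]) (x : nat -> 'cV[R[i]]_n) (p : nat),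
      eigenvalue A lam -> right_jordan_chain A lam x p ->
      forall k : nat, (k < h)%N ->
        right_jordan_chain A (lam * omega R h ^+ k) (right_twist part k x) p) ->
  (forall (lam : R[i]) (y : nat -> 'rV[R[i]]_n) (p : nat),
      eigenvalue A lam -> left_jordan_chain A lam y p ->
      forall k : nat, (k < h)%N ->
        left_jordan_chain A (lam * omega R h ^+ k) (left_twist part k y) p) ->
  h_cyclic A part.
Proof.
move=> Hpart _ Hleft.
have [h1|hle] := ltnP 1 h; last first.
  move=> i j _; have := ltn_ord (part j); have := ltn_ord (part i).
  move=> pi ph; have h1 : h = 1%N by lia.
  subst h; by move: ph; rewrite modn1 ltnS leqn0 => /eqP.
case: n A part Hpart Hleft => [|n'] A part Hpart Hleft; first by move=> [].
have h0 : (0 < h)%N by apply: ltnW.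
set w := omega R h.
have w0 : w != 0 := @omega_neq0 R h h0.
pose E : 'M[R[i]]_n'.+1 := diag_mx (\row_r w ^+ (h - part r)).
pose M := E *m A - w *: (A *m E).
have key : forall a N (v : 'rV_n'.+1), v *m (A - a%:M) ^+ N = 0 -> v *m M = 0.
  move=> a N v vN.
  have [->|vn0] := eqVneq v 0; first by rewrite mul0mx.
  pose y j := v *m (A - a%:M) ^+ j.
  have yS j : y j.+1 = y j *m A - a *: y j.
    by rewrite /y exprSr mulmxA mulmxBr mul_mx_scalar.
  have exP : exists m, y m == 0 by exists N; apply/eqP.
  case: (ex_minnP exP) => m ym0 mmin.
  have ynz j : (j < m)%N -> y j != 0.
    by move=> jm; apply/negP => /mmin; rewrite leqNgt jm.
  have m0 : (0 < m)%N.
    rewrite lt0n; apply/negP => /eqP m0; move: ym0.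
    by rewrite m0 /y expr0 mulmx1 (negbTE vn0).
  have ylast : y m.-1 *m A = a *: y m.-1.
    by apply/eqP; rewrite -subr_eq0 -yS prednK.
  have chain : left_jordan_chain A a y m.
    split; [exact: m0 | exact: ynz | exact: ylast | ].
    by move=> j _; rewrite yS addrC subrK.
  have ev : eigenvalue A a.
    by apply/eigenvalueP; exists (y m.-1) => //; apply: ynz; rewrite ltn_predL.
  case: (Hleft a y m ev chain 1%N h1) => _ _ zlast zS.
  have zE j : left_twist part 1 y j = w ^+ j *: (y j *m E).
    apply/rowP => r; rewrite /left_twist mul_mx_diag !mxE expr1.
    rewrite omega_alpha // ?(ltnW (ltn_ord _)) //.
    rewrite -/w; ring.
  have eq0 : y 0%N *m E *m A = w *: (y 0%N *m A *m E).
    case: (ltnP 1 m) => m1.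
      have := zS 0%N m1; rewrite !zE expr0 !scale1r expr1 yS => ->.
      rewrite mulmxBl -scalemxAl scalerBr scalerA mulrC addrC subrK //.
    have m1' : m.-1 = 0%N by lia.
    move: zlast ylast; rewrite m1' zE expr0 !scale1r => -> ->.
    by rewrite -scalemxAl scalerA mulrC.
  move: eq0; rewrite /y expr0 mulmx1 => eq0.
  by rewrite /M mulmxBr mulmxA eq0 -scalemxAr mulmxA subrr.
have full : (1%:M <= kermx M)%MS.
  have [rs Hrs] := closed_field_poly_normal (char_poly A).
  move: Hrs; rewrite (monicP (char_poly_monic A)) scale1r => Hrs.
  set s := undup rs; set N := size rs.
  pose p_ (i : 'I_(size s)) := ('X - (s`_i)%:P) ^+ N.
  have dv : mxminpoly A %| \prod_(i < size s) p_ i.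
    apply: dvdp_trans (mxminpoly_dvd_char A) _.
    rewrite Hrs -prodr_undup_exp_count -/s.
    have -> : \prod_(i < size s) p_ i = \prod_(a <- s) ('X - a%:P) ^+ N.
      by rewrite (big_nth 0) big_mkord.
    have -> : \prod_(a <- s) ('X - a%:P) ^+ N = \prod_(a <- s) ('X - a%:P) ^+ count_mem a rs * \prod_(a <- s) ('X - a%:P) ^+ (N - count_mem a rs).
      by rewrite -big_split /=; apply: eq_bigr => a _; rewrite -exprD subnKC // count_size.
    exact: dvdp_mulIl.
  have cop : {in predT &, forall i j : 'I_(size s), j != i -> coprimep (p_ i) (p_ j)}.
    move=> i j _ _ ji; rewrite /p_ coprimep_expl // coprimep_expr // coprimep_XsubC root_XsubC.
    by rewrite nth_uniq ?undup_uniq.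
  rewrite -(kermxpoly_min dv) (kermxpoly_prod _ cop).
  apply/sumsmx_subP => i _.
  rewrite sub_kermx; apply/eqP/row_matrixP => r; rewrite row_mul row0.
  apply: (key (s`_i) N).
  have : kermxpoly A (p_ i) *m horner_mx A (p_ i) = 0 := mulmx_ker _.
  rewrite /kermxpoly /= => /(congr1 (row r)); rewrite row_mul row0 /p_ rmorphXn rmorphB /= horner_mx_X horner_mx_C.
  done.
have M0 : M = 0 by move: full; rewrite sub_kermx mul1mx => /eqP.
move=> i j Aij.
have := congr1 (fun X : 'M[R[i]]_n'.+1 => X i j) M0.
rewrite /M mul_diag_mx mul_mx_diag !mxE => /eqP; rewrite subr_eq0 => /eqP H.
have E1 : w ^+ (h - part i) = w ^+ (h - part j).+1.
  apply: (mulIf Aij); rewrite H exprS; ring.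
have := congr1 (fun x => x * w ^+ (part j + part i)) E1; rewrite -!exprD.
have e1 : (h - part i + (part j + part i) = part j + h)%N.
  have := ltn_ord (part i); lia.
have e2 : ((h - part j).+1 + (part j + part i) = (part i).+1 + h)%N.
  have := ltn_ord (part j); lia.
rewrite e1 e2 !exprD (@omega_h R h h0) !mulr1 -(@omega_mod R h (part i).+1 h0) => E2.
by apply: (@omega_inj R h _ _ (ltn_ord _) _ E2); rewrite ltn_mod.
Qed.
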